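(* Let $A,B$ be rings and $M$ a $(B,A)$-bimodule, and let $T=\begin{pmatrix} A & 0\\ M & B\end{pmatrix}$ be the formal triangular matrix ring. If $T$ is weakly $r$-clean, then $A$ and $B$ are weakly $r$-clean.
   Context: Rings are associative with identity. $T$ consists of matrices $\begin{pmatrix} a & 0\\ m & b\end{pmatrix}$ with $a\in A$, $b\in B$, $m\in M$, with matrix addition and multiplication. $Idem(R)$ denotes idempotents and $Reg(R)=\{r: r=ryr \text{ for some } y\in R\}$ regular elements. An element is weakly $r$-clean if it equals $r+e$ or $r-e$ with $r\in Reg(R)$, $e\in Idem(R)$; a ring is weakly $r$-clean if all its elements are. *)

(* Defs.v *)
From mathcomp Require Import all_boot all_algebra.
Set Implicit Arguments. Unset Strict Implicit. Unset Printing Implicit Defensive.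
Import GRing.Theory.
Local Open Scope ring_scope.

Definition is_idem_op (T : Type) (mul : T -> T -> T) (e : T) : Prop :=
  mul e e = e.
Definition is_reg_op (T : Type) (mul : T -> T -> T) (r : T) : Prop :=
  exists y, r = mul (mul r y) r.
Definition weakly_r_clean_elt_op (T : Type) (add : T -> T -> T) (opp : T -> T)
  (mul : T -> T -> T) (x : T) : Prop :=
  exists r e, is_reg_op mul r /\ is_idem_op mul e /\
              (x = add r e \/ x = add r (opp e)).
Definition weakly_r_clean_op (T : Type) (add : T -> T -> T) (opp : T -> T)
  (mul : T -> T -> T) : Prop :=
  forall x, weakly_r_clean_elt_op add opp mul x.

Definition weakly_r_clean (R : pzRingType) : Prop :=
  weakly_r_clean_op (@GRing.add R) (@GRing.opp R) (@GRing.mul R).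

Record bimodule (A B : pzRingType) (M : zmodType)
  (lact : B -> M -> M) (ract : M -> A -> M) : Prop := Bimodule {
  lactDr : forall b m m', lact b (m + m') = lact b m + lact b m';
  lactDl : forall b b' m, lact (b + b') m = lact b m + lact b' m;
  lactA  : forall b b' m, lact (b * b') m = lact b (lact b' m);
  lact1  : forall m, lact 1 m = m;
  ractDl : forall m m' a, ract (m + m') a = ract m a + ract m' a;
  ractDr : forall m a a', ract m (a + a') = ract m a + ract m a';
  ractA  : forall m a a', ract m (a * a') = ract (ract m a) a';
  ract1  : forall m, ract m 1 = m;
  lractA : forall b m a, ract (lact b m) a = lact b (ract m a)
}.

(* The formal triangular matrix ring T = [[A, 0], [M, B]]:
   the element (a, m, b) stands for the matrix [[a, 0], [m, b]]. *)
Definition tri (A B : pzRingType) (M : zmodType) : Type := (A * M * B)%type.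

Definition tri_add (A B : pzRingType) (M : zmodType) (x y : tri A B M)
  : tri A B M :=
  let: (a, m, b) := x in let: (a', m', b') := y in (a + a', m + m', b + b').

Definition tri_opp (A B : pzRingType) (M : zmodType) (x : tri A B M)
  : tri A B M :=
  let: (a, m, b) := x in (- a, - m, - b).

(* [[a,0],[m,b]] * [[a',0],[m',b']] = [[a a', 0], [m a' + b m', b b']] *)
Definition tri_mul (A B : pzRingType) (M : zmodType)
  (lact : B -> M -> M) (ract : M -> A -> M) (x y : tri A B M) : tri A B M :=
  let: (a, m, b) := x in let: (a', m', b') := y in
  (a * a', ract m a' + lact b m', b * b').

Definition tri_weakly_r_clean (A B : pzRingType) (M : zmodType)
  (lact : B -> M -> M) (ract : M -> A -> M) : Prop :=
  weakly_r_clean_op (@tri_add A B M) (@tri_opp A B M) (tri_mul lact ract).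

(* Main.v *)
Require Import Defs.
From mathcomp Require Import all_boot all_algebra.

Theorem proposition2p16 (A B : pzRingType) (M : zmodType)
  (lact : B -> M -> M) (ract : M -> A -> M) :
  bimodule lact ract ->
  tri_weakly_r_clean lact ract ->
  weakly_r_clean A /\ weakly_r_clean B.
Proof.
move=> _ H; split.
- move=> a.
  have [[[r1 rm] r2] [[[e1 em] e2] [[[[y1 ym] y2] Hr] [He Hx]]]] := H (a, 0%R, 0%R).
  rewrite /tri_mul /is_idem_op /= in Hr He; rewrite /tri_add /tri_opp /= in Hx.
  exists r1, e1; split; [|split].
  + exists y1. by case: Hr.
  + by case: He.
  + by case: Hx => [[-> _ _]|[-> _ _]]; [left|right].
- move=> b.
  have [[[r1 rm] r2] [[[e1 em] e2] [[[[y1 ym] y2] Hr] [He Hx]]]] := H (0%R, 0%R, b).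
  rewrite /tri_mul /is_idem_op /= in Hr He; rewrite /tri_add /tri_opp /= in Hx.
  exists r2, e2; split; [|split].
  + exists y2. by case: Hr.
  + by case: He.
  + by case: Hx => [[_ _ ->]|[_ _ ->]]; [left|right].
Qed.
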